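(* Assume $K>1$, $N_r\ge K$, all users share the same parameters $\alpha_k=\alpha$, $c_k=c$, $a_k=a$ ($|a|<1$), data power $P_k=P$ and pilot power $P_{p,k}=P_p$. Let $s=\frac{\sigma_p^2}{\alpha^2P_p\tau_p}$, $\hat e,\check e,z$ as in the definitions below, $\phi=\alpha^2P(\hat ec+\check eca^* )$ and $\beta=K\alpha^2Pz+\sigma_d^2$. Then for every $(P,P_p)$ with $P,P_p>0$ the equation $\frac{\beta}{\phi}=\frac{N_r}{\bar\gamma}-\frac{K-1}{1+\bar\gamma}$ has a unique positive solution $\bar\gamma(P,P_p)$, which is a strictly decreasing function of $\beta/\phi$. Consequently, for $\tau_p,\tau_d\ge1$ and $P_{\mathrm{tot}}>0$, the pairs $(P,P_p)$ maximizing $\bar\gamma(P,P_p)$ subject to $P\tau_d+P_p\tau_p=P_{\mathrm{tot}}$, $P,P_p>0$, are exactly those maximizing $\phi/\beta$ subject to the same constraint.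
   Context: $\hat e=\frac{c(c+s-|a|^2c)}{(c+s)^2-|a|^2c^2}$, $\check e=\frac{acs}{(c+s)^2-|a|^2c^2}$, $z=\frac{cs(c+s-|a|^2c)}{(c+s)^2-|a|^2c^2}$, with $c>0$, $\sigma_p^2,\sigma_d^2>0$. $\tau_p,\tau_d$ are the numbers of pilot and data symbols; $P_{\mathrm{tot}}$ is the per-user total power budget. The equation for $\bar\gamma$ is the average-SINR equation of the MMSE receiver specialized to identical users. *)

(* Defs.v *)
From HB Require Import structures.
From mathcomp Require Import all_boot all_order all_algebra.
From mathcomp Require Import complex.
Set Implicit Arguments. Unset Strict Implicit. Unset Printing Implicit Defensive.
Import Order.TTheory GRing.Theory Num.Theory.
Local Open Scope ring_scope.

Section Defs.
Variable R : rcfType.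
Local Notation C := R[i].

Definition toC (x : R) : C := (x%:C)%C.

Definition s_of (alpha Pp sigp2 : R) (taup : nat) : R :=
  sigp2 / (alpha ^+ 2 * Pp * taup%:R).

Definition den (c s : R) (a : C) : C :=
  (toC c + toC s) ^+ 2 - `|a| ^+ 2 * toC c ^+ 2.

Definition ehat (c s : R) (a : C) : C :=
  toC c * (toC c + toC s - `|a| ^+ 2 * toC c) / den c s a.

Definition echeck (c s : R) (a : C) : C :=
  a * toC c * toC s / den c s a.

Definition zz (c s : R) (a : C) : C :=
  toC c * toC s * (toC c + toC s - `|a| ^+ 2 * toC c) / den c s a.

Definition phi (alpha c : R) (a : C) (P s : R) : C :=
  toC (alpha ^+ 2 * P) * (ehat c s a * toC c + echeck c s a * toC c * conjc a).

Definition beta (K : nat) (alpha c : R) (a : C) (P s sigd2 : R) : C :=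
  toC (K%:R * alpha ^+ 2 * P) * zz c s a + toC sigd2.

Definition sinr_eq (K Nr : nat) (alpha c : R) (a : C) (sigp2 sigd2 : R)
  (taup : nat) (P Pp g : R) : Prop :=
  let s := s_of alpha Pp sigp2 taup in
  beta K alpha c a P s sigd2 / phi alpha c a P s =
  toC (Nr%:R / g - (K%:R - 1) / (1 + g)).

End Defs.

(* Main.v *)
Require Import Defs.
From HB Require Import structures.
From mathcomp Require Import all_boot all_order all_algebra.
From mathcomp Require Import complex.
From mathcomp Require Import ring lra.
Import Order.TTheory GRing.Theory Num.Theory.
Local Open Scope ring_scope.

Lemma toC_div (R : rcfType) (x y : R) : toC x / toC y = toC (x / y).
Proof. by rewrite /toC fmorph_div. Qed.

Lemma phi_real (R : rcfType) alpha c (a : R[i]) P s t :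
  `|a| ^+ 2 = toC t -> a * conjc a = toC t ->
  (c + s) ^+ 2 - t * c ^+ 2 != 0 ->
  phi alpha c a P s = toC (alpha ^+ 2 * P * c ^+ 2 * (c * (1 - t) + s * (1 + t)) / ((c + s) ^+ 2 - t * c ^+ 2)).
Proof.
move=> Hn Haa HD.
have HDC : den c s a = toC ((c + s) ^+ 2 - t * c ^+ 2).
  by rewrite /den Hn /toC !(rmorphM, rmorphD, rmorphN, rmorphB, rmorphXn).
have HD' : den c s a != 0 by rewrite HDC /toC; apply: contra HD => /eqP; rewrite -(rmorph0 (real_complex R)) => /complexI ->.
rewrite /phi /ehat /echeck.
have -> : a * toC c * toC s / den c s a * toC c * conjc a = (a * conjc a) * toC c * toC s / den c s a * toC c by ring.
have E : forall x, toC (x / ((c + s) ^+ 2 - t * c ^+ 2)) = toC x / den c s a.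
  by move=> x; rewrite HDC /toC fmorph_div.
rewrite Haa Hn E /toC.
rewrite !(rmorphM, rmorphD, rmorphN, rmorphB, rmorphXn, rmorph1).
field.
by [].
Qed.

Lemma beta_real (R : rcfType) (K : nat) alpha c (a : R[i]) P s t sigd2 :
  `|a| ^+ 2 = toC t ->
  (c + s) ^+ 2 - t * c ^+ 2 != 0 ->
  beta K alpha c a P s sigd2 = toC (K%:R * alpha ^+ 2 * P * (c * s * (c + s - t * c) / ((c + s) ^+ 2 - t * c ^+ 2)) + sigd2).
Proof.
move=> Hn HD.
have HDC : den c s a = toC ((c + s) ^+ 2 - t * c ^+ 2).
  by rewrite /den Hn /toC !(rmorphM, rmorphD, rmorphN, rmorphB, rmorphXn).
have E : forall x, toC (x / ((c + s) ^+ 2 - t * c ^+ 2)) = toC x / den c s a.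
  by move=> x; rewrite HDC /toC fmorph_div.
rewrite /beta /zz.
have -> : toC c * toC s * (toC c + toC s - `|a| ^+ 2 * toC c) / den c s a = toC (c * s * (c + s - t * c) / ((c + s) ^+ 2 - t * c ^+ 2)).
  rewrite E Hn /toC !(rmorphM, rmorphD, rmorphN, rmorphB, rmorphXn, rmorph1) //.
by rewrite /toC !(rmorphM, rmorphD, rmorph_nat).
Qed.

Lemma a_facts (R : rcfType) (a : R[i]) : `|a| < 1 ->
  exists t : R, [/\ 0 <= t, t < 1, `|a| ^+ 2 = toC t & a * conjc a = toC t].
Proof.
case: a => x y Ha.
have t0 : 0 <= x ^+ 2 + y ^+ 2 by apply: addr_ge0; apply: sqr_ge0.
exists (x ^+ 2 + y ^+ 2).
have Hn : `|(x +i* y)%C| ^+ 2 = toC (x ^+ 2 + y ^+ 2).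
  by rewrite normc_def /= /toC -rmorphXn sqr_sqrtr.
split => //.
- move: Ha; rewrite normc_def /= -(rmorph1 (real_complex R)) ltcR => Hs.
  rewrite -(sqr_sqrtr t0).
  have := sqrtr_ge0 (x ^+ 2 + y ^+ 2). move: Hs.
  set q := Num.sqrt _ => Hs Hq. nra.
- rewrite /toC; apply/eqP; rewrite eq_complex /=.
  apply/andP; split; apply/eqP; ring.
Qed.

Definition fS (R : rcfType) (N k g : R) := N / g - k / (1 + g).
Arguments fS {R}.

Lemma f_lt (R : rcfType) (N k g1 g2 : R) : 0 < k -> k < N -> 0 < g1 -> g1 < g2 ->
  fS N k g2 < fS N k g1.
Proof.
move=> k0 kN g10 g12.
have g20 : 0 < g2 by apply: lt_trans g12.
rewrite -subr_gt0.
have -> : fS N k g1 - fS N k g2 = (g2 - g1) * (N * (1 + g1) * (1 + g2) - k * g1 * g2)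
   / (g1 * g2 * ((1 + g1) * (1 + g2))).
  rewrite /fS; field.
  by rewrite !gt_eqF // ?addr_gt0 // ?ltr01.
apply: divr_gt0; last by rewrite !mulr_gt0 // addr_gt0.
apply: mulr_gt0; first by rewrite subr_gt0.
have h1 : 0 < g1 * g2 by rewrite mulr_gt0.
have h2 : 0 < (N - k) * (g1 * g2) by rewrite mulr_gt0 // subr_gt0.
nra.
Qed.

Lemma f_le (R : rcfType) (N k g1 g2 : R) : 0 < k -> k < N -> 0 < g1 -> 0 < g2 ->
  (fS N k g2 <= fS N k g1) = (g1 <= g2).
Proof.
move=> k0 kN g10 g20.
case: (ltgtP g1 g2) => [h|h|->].
- by rewrite ltW // f_lt.
- by apply/negbTE; rewrite -ltNge f_lt.
- by rewrite lexx.
Qed.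

Lemma f_exist (R : rcfType) (N k r : R) : 0 < k -> k < N -> 0 < r ->
  exists g, 0 < g /\ fS N k g = r.
Proof.
move=> k0 kN r0.
set M := N - k.
set D := (M - r) ^+ 2 + 4%:R * r * N.
have D0 : 0 <= D by rewrite /D; apply: addr_ge0; [apply: sqr_ge0|]; apply: ltW; rewrite !mulr_gt0 // ?ltr0n; lra.
set S := Num.sqrt D.
have S0 : 0 <= S := sqrtr_ge0 D.
have SS : S ^+ 2 = D := sqr_sqrtr D0.
have num0 : 0 < M - r + S.
  rewrite /D in SS.
  have : 0 < 4%:R * r * N by rewrite !mulr_gt0 // ?ltr0n; lra.
  rewrite /M in SS * => H4. nra.
set g := (M - r + S) / (2%:R * r).
have g0 : 0 < g by rewrite divr_gt0 // mulr_gt0 // ltr0n.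
exists g; split => //.
have r0' : r != 0 by rewrite gt_eqF.
have q : r * g ^+ 2 + (r - M) * g - N = 0.
  have -> : r * g ^+ 2 + (r - M) * g - N = (S ^+ 2 - D) / (4%:R * r).
    rewrite /g /D; field.
    by [].
  by rewrite SS subrr mul0r.
apply/eqP; rewrite -subr_eq0.
have -> : fS N k g - r = - (r * g ^+ 2 + (r - M) * g - N) / (g * (1 + g)).
  rewrite /fS /M; field.
  by rewrite !gt_eqF // addr_gt0 // ltr01.
by rewrite q oppr0 mul0r.
Qed.

Theorem lemma4 (R : rcfType) (K Nr taup taud : nat) (alpha c sigp2 sigd2 Ptot : R)
  (a : R[i]) :
  (1 < K)%N -> (K <= Nr)%N -> alpha != 0 -> 0 < c -> `|a| < 1 ->
  0 < sigp2 -> 0 < sigd2 ->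
  let rho := fun P Pp : R =>
    beta K alpha c a P (s_of alpha Pp sigp2 taup) sigd2 /
    phi alpha c a P (s_of alpha Pp sigp2 taup) in
  let ratio := fun P Pp : R =>
    phi alpha c a P (s_of alpha Pp sigp2 taup) /
    beta K alpha c a P (s_of alpha Pp sigp2 taup) sigd2 in
  let sol := fun P Pp g : R => 0 < g /\ sinr_eq K Nr alpha c a sigp2 sigd2 taup P Pp g in
  (* (i) existence and uniqueness of the positive solution *)
  (forall P Pp : R, 0 < P -> 0 < Pp -> exists! g : R, sol P Pp g)
  /\
  (* (ii) the solution is a strictly decreasing function of beta/phi *)
  (forall P1 Pp1 P2 Pp2 g1 g2 : R, 0 < P1 -> 0 < Pp1 -> 0 < P2 -> 0 < Pp2 ->
     sol P1 Pp1 g1 -> sol P2 Pp2 g2 -> rho P1 Pp1 < rho P2 Pp2 -> g2 < g1)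
  /\
  (* (iii) the constrained maximizers of gammabar are the maximizers of phi/beta *)
  ((0 < taup)%N -> (0 < taud)%N -> 0 < Ptot ->
   forall P Pp : R, 0 < P -> 0 < Pp -> P * taud%:R + Pp * taup%:R = Ptot ->
   (forall P' Pp' g g' : R, 0 < P' -> 0 < Pp' -> P' * taud%:R + Pp' * taup%:R = Ptot ->
       sol P Pp g -> sol P' Pp' g' -> g' <= g)
   <->
   (forall P' Pp' : R, 0 < P' -> 0 < Pp' -> P' * taud%:R + Pp' * taup%:R = Ptot ->
       ratio P' Pp' <= ratio P Pp)).
Proof.
move=> HK HN Ha0 Hc Ha Hp Hd rho ratio sol.
have [t [t0 t1 Hn Haa]] := @a_facts R a Ha.
set k : R := K%:R - 1.
set N : R := Nr%:R.
have k0 : 0 < k.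
  rewrite /k subr_gt0 -(ltr_nat R 1 K) in HK *; exact HK.
have kN : k < N.
  rewrite /k /N; have : (K%:R : R) <= Nr%:R by rewrite ler_nat.
  lra.
have al0 : 0 < alpha ^+ 2 by rewrite lt0r sqr_ge0 andbT sqrf_eq0.
have Hrho : forall P Pp, 0 < P -> 0 < Pp ->
   exists r, [/\ 0 < r, rho P Pp = toC r & ratio P Pp = toC r^-1].
  move=> P Pp P0 Pp0.
  rewrite /rho /ratio.
  set s := s_of alpha Pp sigp2 taup.
  have s0 : 0 <= s.
    rewrite /s /s_of; apply: divr_ge0; first exact: ltW.
    by apply: mulr_ge0; [apply: mulr_ge0; apply: ltW|apply: ler0n].
  have D0 : 0 < (c + s) ^+ 2 - t * c ^+ 2.
    have h : t * c ^+ 2 < c ^+ 2.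
      have : 0 < c ^+ 2 by rewrite exprn_gt0.
      nra.
    have : c ^+ 2 <= (c + s) ^+ 2 by nra.
    lra.
  have DD : (c + s) ^+ 2 - t * c ^+ 2 != 0 by rewrite gt_eqF.
  rewrite (@phi_real R alpha c a P s t Hn Haa DD) (@beta_real R K alpha c a P s t sigd2 Hn DD).
  set D := (c + s) ^+ 2 - t * c ^+ 2 in D0 DD *.
  have h1 : 0 < c * (1 - t) + s * (1 + t) by nra.
  have h2 : 0 <= c + s - t * c by nra.
  set Ph := alpha ^+ 2 * P * c ^+ 2 * (c * (1 - t) + s * (1 + t)) / D.
  set Be := K%:R * alpha ^+ 2 * P * (c * s * (c + s - t * c) / D) + sigd2.
  have Ph0 : 0 < Ph.
    rewrite /Ph divr_gt0 //; apply: mulr_gt0 => //; apply: mulr_gt0; [exact: mulr_gt0 | exact: exprn_gt0].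
  have Be0 : 0 < Be.
    have : 0 <= K%:R * alpha ^+ 2 * P * (c * s * (c + s - t * c) / D).
      apply: mulr_ge0; first by apply: mulr_ge0; [apply: mulr_ge0; [exact: ler0n|exact: ltW]|exact: ltW].
      apply: divr_ge0; last exact: ltW D0.
      by apply: mulr_ge0 => //; apply: mulr_ge0 => //; exact: ltW.
    rewrite /Be; lra.
  exists (Be / Ph); split.
  - by rewrite divr_gt0.
  - by rewrite toC_div.
  - by rewrite invf_div toC_div.
have solE : forall P Pp g r, rho P Pp = toC r -> sol P Pp g <-> (0 < g /\ r = fS N k g).
  move=> P Pp g r Hr.
  have E : sinr_eq K Nr alpha c a sigp2 sigd2 taup P Pp g <-> rho P Pp = toC (fS N k g) by [].
  rewrite /sol E Hr; split=> [[g0 /complexI h]|[g0 ->]] //.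
split.
  move=> P Pp P0 Pp0.
  have [r [r0 Hr _]] := Hrho P Pp P0 Pp0.
  have [g [g0 Hg]] := @f_exist R N k r k0 kN r0.
  exists g; split; first by apply/(solE _ _ _ _ Hr).
  move=> g' /(solE _ _ _ _ Hr) [g'0 Hg'].
  apply/eqP; rewrite eq_le -(@f_le R N k g g') // -(@f_le R N k g' g) //.
  by rewrite Hg -Hg' lexx.
split.
  move=> P1 Pp1 P2 Pp2 g1 g2 P10 Pp10 P20 Pp20.
  have [r1 [r10 Hr1 _]] := Hrho P1 Pp1 P10 Pp10.
  have [r2 [r20 Hr2 _]] := Hrho P2 Pp2 P20 Pp20.
  move=> /(solE _ _ _ _ Hr1) [g10 e1] /(solE _ _ _ _ Hr2) [g20 e2].
  rewrite Hr1 Hr2 /toC ltcR => lt12.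
  rewrite ltNge -(@f_le R N k g1 g2) // -e1 -e2 -ltNge //.
move=> _ _ _ P Pp P0 Pp0 _.
have [r [r0 Hr Hq]] := Hrho P Pp P0 Pp0.
split.
  move=> H P' Pp' P'0 Pp'0 HP'.
  have [r' [r'0 Hr' Hq']] := Hrho P' Pp' P'0 Pp'0.
  have [g [g0 Hg]] := @f_exist R N k r k0 kN r0.
  have [g' [g'0 Hg']] := @f_exist R N k r' k0 kN r'0.
  have := H P' Pp' g g' P'0 Pp'0 HP' (proj2 (solE _ _ _ _ Hr) (conj g0 (esym Hg)))
     (proj2 (solE _ _ _ _ Hr') (conj g'0 (esym Hg'))).
  rewrite -(@f_le R N k g' g) // Hg Hg' => h.
  by rewrite Hq Hq' /toC lecR lef_pV2 // posrE.
move=> H P' Pp' g g' P'0 Pp'0 HP'.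
have [r' [r'0 Hr' Hq']] := Hrho P' Pp' P'0 Pp'0.
move=> /(solE _ _ _ _ Hr) [g0 e] /(solE _ _ _ _ Hr') [g'0 e'].
have := H P' Pp' P'0 Pp'0 HP'.
rewrite Hq Hq' /toC lecR lef_pV2 ?posrE // e e' (@f_le R N k g' g) //.
Qed.
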